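(* Let $a\ge2$, $d\ge1$ and $s$ be integers with $\gcd(a,d)=1$ and $1\le s<a$. Let $\mathit{NR}$ be the set of positive integers not representable as $\sum_{i=0}^s(a+id)x_i$ with $x_0,\dots,x_s$ nonnegative integers, and let $S_m=\sum_{n\in\mathit{NR}}n^m$. Then for every integer $m\ge1$, \[ mS_{m-1}=a^{m-1}\sum_{n=0}^{a-1}B_m\!\left(\lceil n/s\rceil+\frac{nd}{a}\right)-B_m . \]
   Context: $B_m(x)$ denotes the Bernoulli polynomials, defined by $\frac{te^{tx}}{e^t-1}=\sum_{m\ge0}B_m(x)\frac{t^m}{m!}$, and $B_m=B_m(0)$. $\lceil x\rceil$ is the least integer not less than $x$. *)

(* Defs.v *)
From HB Require Import structures.
From mathcomp Require Import all_boot all_order all_algebra.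
Set Implicit Arguments. Unset Strict Implicit. Unset Printing Implicit Defensive.
Import Order.TTheory GRing.Theory Num.Theory.
Local Open Scope ring_scope.

(* Bernoulli numbers B_0, ..., B_n, via the recursion equivalent to the
   generating function t/(e^t-1) = sum B_m t^m/m!  (so B_1 = -1/2):
   B_0 = 1 and sum_{k=0}^{n} C(n+1,k) B_k = 0 for n >= 1. *)
Fixpoint bern_seq (n : nat) : seq rat :=
  match n with
  | 0 => [:: 1]
  | n'.+1 =>
      let s := bern_seq n' in
      rcons s (- (\sum_(k < n'.+1) ('C(n'.+2, k))%:R * s`_k) / (n'.+2)%:R)
  end.

Definition bernoulli (n : nat) : rat := (bern_seq n)`_n.

Definition bernpoly (m : nat) (x : rat) : rat :=
  \sum_(k < m.+1) ('C(m, k))%:R * bernoulli k * x ^+ (m - k).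

Definition ceil_div (n s : nat) : nat := (n + s.-1) %/ s.

Definition representable (a d s n : nat) : Prop :=
  exists x : nat -> nat, n = (\sum_(i < s.+1) (a + i * d) * x i)%N.

Definition NR (a d s n : nat) : Prop := (0 < n)%N /\ ~ representable a d s n.

(* Main.v *)
Require Import Defs.
From HB Require Import structures.
From mathcomp Require Import all_boot all_order all_algebra.
From mathcomp Require Import zify ring lra.
Import Order.TTheory GRing.Theory Num.Theory.

Local Close Scope ring_scope.

Lemma rep0 a d s : representable a d s 0.
Proof. by exists (fun _ => 0%N); rewrite big1 // => i _; rewrite muln0. Qed.

Lemma rep_add a d s n i : representable a d s n -> i <= s ->
  representable a d s (n + (a + i * d)).
Proof.
move=> [x ->] hi.
exists (fun t => x t + (t == i :> nat)).
rewrite [RHS](eq_bigr (fun t : 'I_s.+1 => (a + t * d) * x t + (a + t * d) * (t == i :> nat)));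
  last by move=> t _; rewrite mulnDr.
rewrite big_split /=; congr (_ + _).
have hi' : i < s.+1 by [].
rewrite (bigD1 (Ordinal hi')) //= eqxx muln1 big1 ?addn0 // => t ht.
have -> : (t == i :> nat) = false.
  by apply/negbTE; move: ht; apply: contra => /eqP h; apply/eqP/val_inj.
by rewrite muln0.
Qed.

Lemma rep_kj a d s k j : j <= k * s -> representable a d s (k * a + j * d).
Proof.
elim: k j => [|k IH] j hj.
  by move: hj; rewrite mul0n leqn0 => /eqP ->; rewrite !mul0n; exact: rep0.
have hj' : j - minn j s <= k * s by move: hj; rewrite mulSn; lia.
have := rep_add _ _ _ _ _ (IH _ hj') (geq_minr j s).
have -> : (k * a + (j - minn j s) * d + (a + minn j s * d) = k.+1 * a + j * d).
  rewrite mulSn; have hm : minn j s <= j by apply: geq_minl.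
  rewrite mulnBl; nia.
by [].
Qed.

Lemma rep_inv a d s n : representable a d s n ->
  exists k j, j <= k * s /\ n = k * a + j * d.
Proof.
move=> [x ->].
exists (\sum_(i < s.+1) x i), (\sum_(i < s.+1) i * x i); split.
  rewrite big_distrl /=; apply: leq_sum => i _.
  by rewrite mulnC leq_mul2l -ltnS ltn_ord orbT.
rewrite !big_distrl /= -big_split /=; apply: eq_bigr => i _; ring.
Qed.

Lemma ceil_ge c s : 0 < s -> c <= ceil_div c s * s.
Proof.
move=> hs; have := ltn_ceil (c + s.-1) hs; rewrite /ceil_div.
set q := (c + s.-1) %/ s; rewrite mulSn; lia.
Qed.

Lemma ceil_min c s k : 0 < s -> c <= k * s -> ceil_div c s <= k.
Proof.
move=> hs hc; rewrite /ceil_div -ltnS ltn_divLR // mulSn; lia.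
Qed.

Lemma modinj a d c c' : 0 < a -> coprime a d -> c < a -> c' < a ->
  c * d = c' * d %[mod a] -> c = c'.
Proof.
move=> ha hcop.
wlog hle : c c' / c' <= c.
  move=> W hc hc' h; case: (leqP c' c) => h'; first exact: W.
  by apply/esym/W => //; apply: ltnW.
move=> hc hc' /eqP h.
rewrite eqn_mod_dvd ?leq_mul2r ?hle ?orbT // -mulnBl Gauss_dvdl // in h.
have : c - c' = 0.
  case: (posnP (c - c')) => // hp.
  by have := dvdn_leq hp h; lia.
lia.
Qed.

Lemma modinj2 a d c j : 0 < a -> coprime a d -> c < a ->
  j * d = c * d %[mod a] -> j %% a = c.
Proof.
move=> ha hcop hc h; apply: (modinj _ _ _ _ ha hcop) => //; first by rewrite ltn_mod.
by rewrite modnMml.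
Qed.

Lemma modinv a d : 0 < d -> coprime a d -> exists e, e * d = 1 %[mod a].
Proof.
move=> hd hcop; case: (egcdnP a hd) => km kn.
rewrite gcdnC (eqP hcop) => h _; exists km; by rewrite h modnMDl.
Qed.

Definition ww a d s c := ceil_div c s * a + c * d.
Definition KK a d s c := ww a d s c %/ a.
Definition rr a d s c := ww a d s c %% a.
Definition LL a d s :=
  [seq rr a d s c + t * a | c <- iota 0 a, t <- iota 0 (KK a d s c)].

Lemma rr_eq a d s c : rr a d s c = (c * d) %% a.
Proof. by rewrite /rr /ww modnMDl. Qed.

Lemma notrep a d s c u n : 0 < s -> 0 < a -> coprime a d -> c < a -> 0 < u ->
  n + u * a = ww a d s c -> ~ representable a d s n.
Proof.
move=> hs ha hcop hc hu hn /rep_inv [k [j [hj hnk]]].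
rewrite hnk /ww in hn.
have hmod : j * d = c * d %[mod a].
  rewrite -(modnMDl (k+u) (j*d) a) -(modnMDl (ceil_div c s) (c*d) a).
  congr (_ %% a); rewrite mulnDl; lia.
have hjc := modinj2 _ _ _ _ ha hcop hc hmod.
have hcj : c <= j by rewrite -hjc leq_mod.
have hq : ceil_div c s <= k by apply: ceil_min => //; apply: leq_trans hcj hj.
have h1 : ceil_div c s * a <= k * a by rewrite leq_mul2r hq orbT.
have h2 : c * d <= j * d by rewrite leq_mul2r hcj orbT.
have h3 : a <= u * a by rewrite leq_pmull.
lia.
Qed.

Lemma mem_LL a d s n : 1 < a -> 0 < d -> coprime a d -> 0 < s ->
  n \in LL a d s <-> NR a d s n.
Proof.
move=> ha hd hcop hs.
have ha0 : 0 < a by apply: ltnW.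
split.
- move=> /allpairsPdep [c [t [hc ht ->]]].
  rewrite mem_iota add0n in hc; rewrite mem_iota add0n in ht.
  move/andP: hc => [_ hc]; move/andP: ht => [_ ht].
  have hw : ww a d s c = KK a d s c * a + rr a d s c by apply: divn_eq.
  split.
  + rewrite lt0n; apply/negP => /eqP h0.
    have hr0 : rr a d s c = 0 by lia.
    have ht0 : t = 0.
      move/eqP: (h0); rewrite addn_eq0 muln_eq0 => /andP [_ /orP [/eqP // | /eqP ha']].
      by rewrite ha' in ha0.
    rewrite rr_eq in hr0.
    have hc0 : c = 0.
      apply: (modinj _ _ _ _ ha0 hcop) => //.
      by rewrite mul0n mod0n hr0.
    move: ht; rewrite ht0 hc0 /KK /ww mul0n addn0 mulnK //.
    by rewrite /ceil_div add0n divn_small // prednK // ltnSn.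
  + apply: (notrep a d s c (KK a d s c - t)) => //.
    * by rewrite subn_gt0.
    * rewrite hw mulnBl; have : t * a <= KK a d s c * a by rewrite leq_mul2r (ltnW ht) orbT.
      lia.
- move=> [hn hnr].
  have [e he] := modinv _ _ hd hcop.
  set c := (n * e) %% a.
  have hc : c < a by rewrite ltn_mod.
  have hcd : (c * d) %% a = n %% a.
    by rewrite /c modnMml -mulnA -modnMmr he modnMmr muln1.
  have hwmod : ww a d s c %% a = n %% a by rewrite -hcd -(rr_eq a d s).
  case: (leqP (ww a d s c) n) => hwn.
    exfalso; apply: hnr.
    have /eqP := hwmod; rewrite eq_sym eqn_mod_dvd // => /dvdnP [u hu].
    have -> : n = (ceil_div c s + u) * a + c * d.
      by rewrite mulnDl; move: hu hwn; rewrite /ww; lia.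
    apply: rep_kj; apply: leq_trans (ceil_ge c s hs) _.
    by rewrite leq_mul2r leq_addr orbT.
  apply/allpairsPdep; exists c, (n %/ a); split.
  + by rewrite mem_iota add0n hc.
  + rewrite mem_iota add0n /= /KK.
    have hw : ww a d s c = ww a d s c %/ a * a + ww a d s c %% a by apply: divn_eq.
    have hn' : n = n %/ a * a + n %% a by apply: divn_eq.
    rewrite -(ltn_pmul2r ha0); lia.
  + by rewrite /rr hwmod addnC -divn_eq.
Qed.

Lemma uniq_LL a d s : 0 < a -> coprime a d -> uniq (LL a d s).
Proof.
move=> ha hcop; apply: allpairs_uniq_dep; first exact: iota_uniq.
  by move=> c _; exact: iota_uniq.
move=> [c1 t1] [c2 t2] h1 h2 /= e.
have hc1 : c1 < a.
  move: h1 => /allpairsPdep [x [y [hx _ hxy]]].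
  have -> : c1 = x by have := congr1 tag hxy.
  by rewrite mem_iota in hx.
have hc2 : c2 < a.
  move: h2 => /allpairsPdep [x [y [hx _ hxy]]].
  have -> : c2 = x by have := congr1 tag hxy.
  by rewrite mem_iota in hx.
have hr1 : rr a d s c1 < a by rewrite ltn_mod.
have hr2 : rr a d s c2 < a by rewrite ltn_mod.
have em : rr a d s c1 = rr a d s c2.
  have := congr1 (fun z => z %% a) e => /=.
  by rewrite addnC modnMDl addnC modnMDl !modn_small.
have ec : c1 = c2.
  apply: (modinj _ _ _ _ ha hcop) => //.
  by rewrite -!(rr_eq a d s) em.
have et : t1 = t2.
  have := congr1 (fun z => z %/ a) e => /=.
  by rewrite [rr _ _ _ c1 + _]addnC [rr _ _ _ c2 + _]addnC !divnMDl // !divn_small // !addn0.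
by subst.
Qed.

Local Open Scope ring_scope.

Lemma size_bern n : size (bern_seq n) = n.+1.
Proof. by elim: n => [|n IH] //=; rewrite size_rcons IH. Qed.

Lemma bern_nth n k : (k <= n)%N -> (bern_seq n)`_k = bernoulli k.
Proof.
elim: n k => [|n IH] k; first by rewrite leqn0 => /eqP ->.
rewrite leq_eqVlt => /orP [/eqP -> //|hk].
rewrite /= nth_rcons size_bern hk; exact: IH.
Qed.

Lemma bern0 : bernoulli 0 = 1.
Proof. by []. Qed.

Lemma bernS n : bernoulli n.+1 =
  - (\sum_(k < n.+1) ('C(n.+2, k))%:R * bernoulli k) / (n.+2)%:R.
Proof.
rewrite /bernoulli /= nth_rcons size_bern ltnn eqxx.
congr (- _ / _); apply: eq_bigr => k _; rewrite bern_nth //.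
by rewrite -ltnS.
Qed.

Lemma bern_rec N : (2 <= N)%N ->
  \sum_(k < N) ('C(N, k))%:R * bernoulli k = 0.
Proof.
case: N => [|[|n]] // _.
rewrite big_ord_recr /= bernS binSn.
set S := \sum_(k < n.+1) _.
have h : (n.+2)%:R != 0 :> rat by rewrite pnatr_eq0.
by rewrite mulrC divrK ?unitfE // subrr.
Qed.
Lemma bin_swap N i j : (i + j <= N)%N ->
  ('C(N, i + j) * 'C(i + j, j) = 'C(N, j) * 'C(N - j, i))%N.
Proof.
move=> hij.
have H1 := bin_fact hij.
have hj : (j <= i + j)%N by rewrite leq_addl.
have H2 := bin_fact hj.
have hjN : (j <= N)%N by apply: leq_trans hj hij.
have H3 := bin_fact hjN.
have hiN : (i <= N - j)%N by lia.
have H4 := bin_fact hiN.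
have e1 : (i + j - j = i)%N by lia.
have e2 : (N - j - i = N - (i + j))%N by lia.
rewrite e1 in H2; rewrite e2 in H4.
apply/eqP; rewrite -(@eqn_pmul2r (j`! * i`! * (N - (i + j))`!)); last first.
  by rewrite !muln_gt0 !fact_gt0.
have -> : ('C(N, i + j) * 'C(i + j, j) * (j`! * i`! * (N - (i + j))`!) =
   'C(N, i + j) * ('C(i + j, j) * (j`! * i`!)) * (N - (i + j))`!)%N by ring.
rewrite H2 -mulnA H1.
have -> : ('C(N, j) * 'C(N - j, i) * (j`! * i`! * (N - (i + j))`!) =
   'C(N, j) * (j`! * ('C(N - j, i) * (i`! * (N - (i + j))`!))))%N by ring.
by rewrite H4 H3.
Qed.

Definition appell (b : nat -> rat) (m : nat) (x : rat) :=
  \sum_(k < m.+1) ('C(m, k))%:R * b k * x ^+ (m - k).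

Lemma appell_ext b N k x : (k <= N)%N ->
  appell b k x = \sum_(j < N.+1) ('C(k, j))%:R * b j * x ^+ (k - j).
Proof.
move=> hk; rewrite /appell (big_ord_widen N.+1 (fun j => ('C(k, j))%:R * b j * x ^+ (k - j))) //.
rewrite big_mkcond; apply: eq_bigr => j _; case: ifP => // /negbT.
by rewrite -leqNgt => hj; rewrite bin_small // !mul0r.
Qed.

Lemma binom_inner N j (x y : rat) : (j < N.+1)%N ->
  \sum_(k < N.+1) ('C(N, k))%:R * ('C(k, j))%:R * x ^+ (k - j) * y ^+ (N - k)
  = ('C(N, j))%:R * (x + y) ^+ (N - j).
Proof.
move=> hj.
rewrite addrC exprDn big_distrr /=.
rewrite -(big_mkord xpredT (fun k => ('C(N, k))%:R * ('C(k, j))%:R * x ^+ (k - j) * y ^+ (N - k))).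
rewrite (big_cat_nat _ (n := j)) //=; last exact: ltnW.
rewrite big_nat_cond big1 ?add0r; last first.
  by move=> k /andP [/andP [_ hk] _]; rewrite (bin_small hk) mulr0 !mul0r.
rewrite -{1}(add0n j) big_addn.
have -> : (N.+1 - j = (N - j).+1)%N by lia.
rewrite big_mkord; apply: eq_bigr => i _.
have hij : (i + j <= N)%N by have := ltn_ord i; lia.
rewrite -natrM bin_swap // natrM.
have -> : (i + j - j = i)%N by lia.
have -> : (N - (i + j) = N - j - i)%N by lia.
by rewrite -mulr_natr; ring.
Qed.

Lemma appellD b N x y : appell b N (x + y) =
  \sum_(k < N.+1) ('C(N, k))%:R * appell b k x * y ^+ (N - k).
Proof.
rewrite (eq_bigr (fun k : 'I_N.+1 => \sum_(j < N.+1)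
   ('C(N, k))%:R * ('C(k, j))%:R * x ^+ (k - j) * y ^+ (N - k) * b j)); last first.
  move=> k _; rewrite (appell_ext b N k x (ltnSE (ltn_ord k))).
  rewrite big_distrr big_distrl; apply: eq_bigr => j _ /=; ring.
rewrite exchange_big /appell; apply: eq_bigr => j _.
rewrite -big_distrl /= binom_inner //; ring.
Qed.

Lemma appell0 b N : appell b N 0 = b N.
Proof.
rewrite /appell big_ord_recr /= subnn expr0 binn mulr1 mul1r.
rewrite big1 ?add0r // => k _.
by rewrite expr0n subn_eq0 leqNgt ltn_ord /= mulr0.
Qed.

Lemma bern_at1 k : appell bernoulli k 1 = bernoulli k + (k == 1%N)%:R.
Proof.
rewrite /appell.
under eq_bigr do rewrite expr1n mulr1.
case: k => [|[|n]].
- by rewrite big_ord1 /= addr0 mul1r.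
- by rewrite !big_ord_recr big_ord0 /= add0r mul1r bern0 mul1r addrC.
- rewrite big_ord_recr /= bern_rec // add0r binn mul1r.
  by rewrite addr0.
Qed.

Lemma bern_diff m x : (1 <= m)%N ->
  appell bernoulli m (1 + x) - appell bernoulli m x = m%:R * x ^+ m.-1.
Proof.
move=> hm; rewrite appellD.
under eq_bigr do rewrite bern_at1 mulrDr mulrDl.
rewrite big_split /= addrAC /appell subrr add0r.
have h1 : (1 < m.+1)%N by [].
rewrite (bigD1 (Ordinal h1)) //= big1 ?addr0; last first.
  move=> k hk; have -> : (k == 1%N :> nat) = false.
    by apply/negbTE; move: hk; apply: contra => /eqP hk; apply/eqP/val_inj.
  by rewrite mulr0 mul0r.
by rewrite bin1 mulr1 subn1.
Qed.

Definition Emul (a : nat) (k : nat) : rat :=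
  a%:R ^+ k / a%:R * \sum_(r < a) appell bernoulli k (r%:R / a%:R).

Lemma Emul0 a : (0 < a)%N -> Emul a 0 = 1.
Proof.
move=> ha; rewrite /Emul.
under eq_bigr do rewrite /appell big_ord1 /= bin0 bern0 !mul1r expr0.
rewrite sumr_const card_ord expr0 mul1r -[_ *+ a]mulr_natr mul1r mulVf //.
by rewrite pnatr_eq0 -lt0n.
Qed.

Lemma Emul_rec a N : (0 < a)%N -> (2 <= N)%N ->
  \sum_(k < N.+1) ('C(N, k))%:R * Emul a k = Emul a N.
Proof.
move=> ha hN.
have ha0 : a%:R != 0 :> rat by rewrite pnatr_eq0 -lt0n.
have tel : \sum_(r < a) appell bernoulli N ((r.+1)%:R / a%:R)
         = \sum_(r < a) appell bernoulli N (r%:R / a%:R).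
  apply/eqP; rewrite -subr_eq0 -sumrB.
  rewrite -(big_mkord xpredT (fun r => appell bernoulli N (r.+1%:R / a%:R) - appell bernoulli N (r%:R / a%:R))).
  rewrite (telescope_sumr (fun r => appell bernoulli N (r%:R / a%:R))) //.
  rewrite divff // mul0r bern_at1 appell0.
  have -> : (N == 1%N) = false by case: N hN => [|[|]].
  by rewrite addr0 subrr.
rewrite /Emul -tel.
under [in RHS]eq_bigr => r _ do rewrite -addn1 natrD mulrDl mul1r appellD.
symmetry; rewrite big_distrr /=.
under eq_bigr do rewrite big_distrr /=.
rewrite exchange_big /=.
apply: eq_bigr => k _.
rewrite big_distrr /= big_distrr /=; apply: eq_bigr => r _.
have hk : (k <= N)%N by rewrite -ltnS.
rewrite -{1}(subnKC hk) exprD.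
have : (a%:R ^+ (N - k) * (a%:R^-1) ^+ (N - k)) = 1 :> rat.
  by rewrite -exprMn divff // expr1n.
move=> e; transitivity ('C(N, k)%:R * (a%:R ^+ k / a%:R * appell bernoulli k (r%:R / a%:R)) * (a%:R ^+ (N - k) * (a%:R^-1) ^+ (N - k))); first ring.
by rewrite e mulr1.
Qed.

Lemma Emul_bern a n : (0 < a)%N -> Emul a n = bernoulli n.
Proof.
move=> ha; elim/ltn_ind: n => [[|n]] IH; first by rewrite Emul0.
have := Emul_rec a n.+2 ha isT.
rewrite big_ord_recr /= big_ord_recr /= binn mul1r binSn.
move=> h.
have hS : \sum_(i < n.+1) ('C(n.+2, i))%:R * Emul a i
        = \sum_(k < n.+1) ('C(n.+2, k))%:R * bernoulli k.
  by apply: eq_bigr => i _; rewrite IH // ltnS ltnW.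
rewrite hS in h.
have hn : (n.+2)%:R != 0 :> rat by rewrite pnatr_eq0.
rewrite bernS; apply: (mulfI hn).
rewrite [RHS]mulrC divfK //.
move: h; set S := \sum_(k < n.+1) _; set T := _ * Emul a n.+1.
move=> h.
have h' : S + T = 0 by rewrite -(addrK (Emul a n.+2) (S + T)) h subrr.
by apply/eqP; rewrite -addr_eq0 addrC h'.
Qed.

Lemma per_c a d s c m : (0 < a)%N -> (1 <= m)%N ->
  m%:R * \sum_(t <- iota 0 (KK a d s c)) ((rr a d s c + t * a)%:R : rat) ^+ m.-1
  = a%:R ^+ m.-1 * (appell bernoulli m ((ceil_div c s)%:R + (c * d)%:R / a%:R)
                   - appell bernoulli m ((rr a d s c)%:R / a%:R)).
Proof.
move=> ha hm.
have ha0 : a%:R != 0 :> rat by rewrite pnatr_eq0 -lt0n.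
set y := (rr a d s c)%:R / a%:R.
have -> : iota 0 (KK a d s c) = index_iota 0 (KK a d s c) by rewrite /index_iota subn0.
rewrite mulr_sumr.
rewrite (telescope_sumr_eq (fun t => a%:R ^+ m.-1 * appell bernoulli m (y + t%:R))); last first.
  move=> t _.
  have -> : ((rr a d s c + t * a)%:R : rat) = a%:R * (y + t%:R).
    by rewrite /y natrD natrM mulrDr mulrCA divff // mulr1 mulrC.
  rewrite exprMn mulrCA.
  transitivity (a%:R ^+ m.-1 * (appell bernoulli m (y + t.+1%:R) - appell bernoulli m (y + t%:R))); last by rewrite mulrBr.
  congr (_ * _); rewrite -bern_diff //.
  by rewrite -addn1 natrD; congr (appell _ _ _ - _); ring.
  by [].
transitivity (a%:R ^+ m.-1 * (appell bernoulli m (y + (KK a d s c)%:R) - appell bernoulli m (y + 0))); first by rewrite mulrBr.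
rewrite addr0; congr (_ * (appell _ _ _ - _)).
have hw : (ceil_div c s * a + c * d = KK a d s c * a + rr a d s c)%N by apply: divn_eq.
apply: (mulfI ha0).
rewrite /y mulrDr mulrCA divff // mulr1 mulrDr mulrCA divff // mulr1.
by rewrite [a%:R * (KK _ _ _ _)%:R]mulrC [a%:R * (ceil_div _ _)%:R]mulrC -!natrM -!natrD hw addnC.
Qed.

Theorem mainTheorem3 (a d s : nat) :
  (2 <= a)%N -> (1 <= d)%N -> coprime a d -> (1 <= s)%N -> (s < a)%N ->
  (exists l : seq nat, uniq l /\ forall n, n \in l <-> NR a d s n) /\
  forall l : seq nat, uniq l -> (forall n, n \in l <-> NR a d s n) ->
  forall m : nat, (1 <= m)%N ->
    (m%:R : rat) * (\sum_(n <- l) (n%:R : rat) ^+ (m.-1)) =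
    (a%:R : rat) ^+ (m.-1) *
      (\sum_(n < a) bernpoly m ((ceil_div n s)%:R + (n * d)%:R / a%:R))
    - bernoulli m.
Proof.
move=> ha hd hcop hs hsa.
have ha0 : (0 < a)%N by apply: ltnW.
split.
  exists (LL a d s); split; first exact: uniq_LL.
  by move=> n; apply: mem_LL.
move=> l hl hmem m hm.
have hperm : perm_eq l (LL a d s).
  apply: uniq_perm => //; first exact: uniq_LL.
  move=> n; apply/idP/idP => h.
    by apply/(mem_LL _ _ _ _ ha hd hcop hs)/hmem.
  by apply/hmem/(mem_LL _ _ _ _ ha hd hcop hs).
rewrite (perm_big _ hperm) /LL big_allpairs_dep /= mulr_sumr.
rewrite (eq_bigr _ (fun c _ => per_c a d s c m ha0 hm)).
rewrite -mulr_sumr sumrB mulrBr.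
have -> : iota 0 a = index_iota 0 a by rewrite /index_iota subn0.
have e1 : \sum_(0 <= i < a) appell bernoulli m ((ceil_div i s)%:R + (i * d)%:R / a%:R)
   = \sum_(n < a) bernpoly m ((ceil_div n s)%:R + (n * d)%:R / a%:R).
  by rewrite big_mkord.
have e2 : a%:R ^+ m.-1 * \sum_(0 <= i < a) appell bernoulli m ((rr a d s i)%:R / a%:R)
   = bernoulli m.
  rewrite big_mkord.
  pose h := fun c : 'I_a => Ordinal (ltn_pmod (c * d) ha0).
  have hinj : injective h.
    move=> c1 c2 /(congr1 val) /= e; apply/val_inj/(modinj _ _ _ _ ha0 hcop) => //; exact: ltn_ord.
  under eq_bigr do rewrite rr_eq.
  rewrite -(Emul_bern a m ha0) /Emul [in RHS](reindex_inj hinj) /=.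
  clear e1; case: m hm => // m _ /=; rewrite exprS [a%:R * _]mulrC mulfK //.
  by rewrite pnatr_eq0 -lt0n.
by rewrite e1 e2.
Qed.
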